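(* For all $(n,k),(p,q)\in\mathcal{I}$, $$S^{n,k}_{p,q}=\int_0^1\Big(\phi^\alpha_{n,k}(t)+\frac{\alpha(t)-\beta(t)}{\sqrt{\Gamma(t)}}\psi^\alpha_{n,k}(t)\Big)\Big(\phi^\alpha_{p,q}(t)+\frac{\alpha(t)-\beta(t)}{\sqrt{\Gamma(t)}}\psi^\alpha_{p,q}(t)\Big)\,dt.$$
   Context: One-dimensional setting. Let $\alpha,\beta:[0,1]\to\mathbb{R}$ and $\sqrt{\Gamma}:[0,1]\to(0,\infty)$ be H\''older continuous, $\Gamma=(\sqrt{\Gamma})^2$. For $\gamma\in\{\alpha,\beta\}$ (corresponding to the process $dX_t=\gamma(t)X_tdt+\sqrt{\Gamma(t)}dW_t$, $X_0=0$) let $g_\gamma(t)=\exp(\int_0^t\gamma)$, $f_\gamma(t)=\sqrt{\Gamma(t)}\exp(-\int_0^t\gamma)$, $h_\gamma(t)=\int_0^tf_\gamma(s)^2ds$, $h_\gamma(s,t)=h_\gamma(t)-h_\gamma(s)$. $\mathcal{I}=\{(0,0)\}\cup\{(n,k):n\ge1,\ 0\le k<2^{n-1}\}$. Partition: fix $\rho\in(0,1)$ and reals $l_{n,k}<m_{n,k}<r_{n,k}$ ($n\ge1$) with $l_{1,0}=0$, $r_{1,0}=1$, $l_{n+1,2k}=l_{n,k}$, $r_{n+1,2k}=l_{n+1,2k+1}=m_{n,k}$, $r_{n+1,2k+1}=r_{n,k}$, $\max(r_{n,k}-m_{n,k},m_{n,k}-l_{n,k})<\rho(r_{n,k}-l_{n,k})$.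 For $n\ge1$, writing $l,m,r$ for $l_{n,k},m_{n,k},r_{n,k}$: $\sigma^\gamma_{n,k}=g_\gamma(m)\sqrt{h_\gamma(l,m)h_\gamma(m,r)/h_\gamma(l,r)}$, $L^\gamma_{n,k}=\sigma^\gamma_{n,k}/(g_\gamma(m)h_\gamma(l,m))$, $R^\gamma_{n,k}=\sigma^\gamma_{n,k}/(g_\gamma(m)h_\gamma(m,r))$, $M^\gamma_{n,k}=g_\gamma(m)/\sigma^\gamma_{n,k}$, and $\psi^\gamma_{n,k}(t)=g_\gamma(t)h_\gamma(l,t)L^\gamma_{n,k}$ on $[l,m]$, $g_\gamma(t)h_\gamma(t,r)R^\gamma_{n,k}$ on $[m,r]$, $0$ elsewhere. Also $\sigma^\gamma_{0,0}=g_\gamma(1)\sqrt{h_\gamma(0,1)}$, $L^\gamma_{0,0}=\sigma^\gamma_{0,0}/(g_\gamma(1)h_\gamma(0,1))$, $\psi^\gamma_{0,0}(t)=g_\gamma(t)h_\gamma(0,t)L^\gamma_{0,0}$. Let $\phi^\gamma_{n,k}(t)=\frac{1}{f_\gamma(t)}\frac{d}{dt}\big(\psi^\gamma_{n,k}(t)/g_\gamma(t)\big)$ (defined except at finitely many points). For continuous $x$: $\Delta^\gamma_{n,k}(x)=M^\gamma_{n,k}x(m)/g_\gamma(m)-L^\gamma_{n,k}x(l)/g_\gamma(l)-R^\gamma_{n,k}x(r)/g_\gamma(r)$ ($n\ge1$), $\Delta^\gamma_{0,0}(x)=L^\gamma_{0,0}x(1)/g_\gamma(1)$. Let $G^{i,j}_{n,k}=\Delta^\beta_{i,j}(\psi^\alpha_{n,k})$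 (the matrix of the coefficient lift operator mapping coefficients of the $\alpha$-process to those of the $\beta$-process) and $S^{n,k}_{p,q}=\sum_{(i,j)\in\mathcal{I}}G^{i,j}_{n,k}G^{i,j}_{p,q}$ (the matrix of $G^TG$). *)

(* Defs.v *)
From Stdlib Require Import Reals Lra Lia.
From Coquelicot Require Import Coquelicot.
Open Scope R_scope.

Definition holder01 (f : R -> R) : Prop :=
  exists (C a : R), 0 < a <= 1 /\
    forall s t, 0 <= s <= 1 -> 0 <= t <= 1 ->
      Rabs (f s - f t) <= C * Rpower (Rabs (s - t)) a.

Definition partition (rho : R) (l m r : nat -> nat -> R) : Prop :=
  0 < rho < 1 /\
  l 1%nat 0%nat = 0 /\ r 1%nat 0%nat = 1 /\
  forall n k : nat, (1 <= n)%nat -> (k < 2 ^ (n - 1))%nat ->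
    l n k < m n k < r n k /\
    Rmax (r n k - m n k) (m n k - l n k) < rho * (r n k - l n k) /\
    l (S n) (2 * k)%nat = l n k /\
    r (S n) (2 * k)%nat = m n k /\
    l (S n) (2 * k + 1)%nat = m n k /\
    r (S n) (2 * k + 1)%nat = r n k.

Definition inI (n k : nat) : Prop :=
  (n = 0%nat /\ k = 0%nat) \/ ((1 <= n)%nat /\ (k < 2 ^ (n - 1))%nat).

Section Coeffs.
Variables (gam sG : R -> R) (l m r : nat -> nat -> R).

Definition gfun (t : R) : R := exp (RInt gam 0 t).
Definition ffun (t : R) : R := sG t * exp (- RInt gam 0 t).
Definition hfun (t : R) : R := RInt (fun s => (ffun s) ^ 2) 0 t.
Definition hint (s t : R) : R := hfun t - hfun s.

Definition sigma (n k : nat) : R :=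
  if Nat.eqb n 0 then gfun 1 * sqrt (hint 0 1)
  else gfun (m n k) * sqrt (hint (l n k) (m n k) * hint (m n k) (r n k)
                             / hint (l n k) (r n k)).

Definition Lc (n k : nat) : R :=
  if Nat.eqb n 0 then sigma n k / (gfun 1 * hint 0 1)
  else sigma n k / (gfun (m n k) * hint (l n k) (m n k)).

Definition Rc (n k : nat) : R :=
  sigma n k / (gfun (m n k) * hint (m n k) (r n k)).

Definition Mc (n k : nat) : R := gfun (m n k) / sigma n k.

Definition psi (n k : nat) (t : R) : R :=
  if Nat.eqb n 0 then gfun t * hint 0 t * Lc n k
  else if Rle_dec (l n k) t then
         if Rle_dec t (m n k) then gfun t * hint (l n k) t * Lc n k
         else if Rle_dec t (r n k) then gfun t * hint t (r n k) * Rc n k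
         else 0
       else 0.

(* phi = (1/f) d/dt (psi/g); Derive is total, its value at the finitely
   many kinks is irrelevant for the integral. *)
Definition phi (n k : nat) (t : R) : R :=
  / ffun t * Derive (fun s => psi n k s / gfun s) t.

Definition Delta (n k : nat) (x : R -> R) : R :=
  if Nat.eqb n 0 then Lc n k * x 1 / gfun 1
  else Mc n k * x (m n k) / gfun (m n k)
       - Lc n k * x (l n k) / gfun (l n k)
       - Rc n k * x (r n k) / gfun (r n k).

End Coeffs.

Definition Gmat (alpha beta sG : R -> R) (l m r : nat -> nat -> R)
  (i j n k : nat) : R :=
  Delta beta sG l m r i j (psi alpha sG l m r n k).

Definition level_size (i : nat) : nat := if Nat.eqb i 0 then 1%nat else (2 ^ (i - 1))%nat.

Definition sumI (F : nat -> nat -> R) (N : nat) : R :=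
  sum_f_R0 (fun i => sum_f_R0 (fun j => F i j) (level_size i - 1)) N.

(* Main.v *)
Require Import Defs.
From Stdlib Require Import Reals Lra Lia.
From Coquelicot Require Import Coquelicot.
Open Scope R_scope.

Fixpoint ssum (f : nat -> R) (K : nat) : R :=
  match K with O => 0 | S K' => ssum f K' + f K' end.

Lemma sum_f_R0_ssum f K : sum_f_R0 f K = ssum f (S K).
Proof. induction K; simpl; [lra|]. rewrite IHK; simpl; lra. Qed.

Lemma ssum_pairs f K : ssum f (2*K) = ssum (fun k => f (2*k)%nat + f (2*k+1)%nat) K.
Proof.
  induction K as [|K IH]. simpl; lra.
  replace (2 * S K)%nat with (S (S (2*K))) by lia. cbn [ssum]. rewrite IH.
  replace (S (2*K))%nat with (2*K+1)%nat by lia. lra.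
Qed.

Lemma ssum_S f K : ssum f (S K) = ssum f K + f K.
Proof. reflexivity. Qed.

Lemma ssum_ext f g K : (forall j, (j < K)%nat -> f j = g j) -> ssum f K = ssum g K.
Proof. induction K; intros H; simpl; [lra|]. rewrite IHK by (intros; apply H; lia). rewrite H by lia; lra. Qed.

Lemma ssum_plus f g K : ssum (fun j => f j + g j) K = ssum f K + ssum g K.
Proof. induction K; simpl; lra. Qed.
Lemma ssum_minus f g K : ssum (fun j => f j - g j) K = ssum f K - ssum g K.
Proof. induction K; simpl; lra. Qed.
Lemma ssum_scal c f K : ssum (fun j => c * f j) K = c * ssum f K.
Proof. induction K; simpl; lra. Qed.
Lemma ssum_le f g K : (forall j, (j<K)%nat -> f j <= g j) -> ssum f K <= ssum g K.
Proof. induction K; intros H; simpl; [lra|]. specialize (IHK ltac:(intros; apply H; lia)). specialize (H K ltac:(lia)). lra. Qed.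
Lemma ssum_abs f K : Rabs (ssum f K) <= ssum (fun j => Rabs (f j)) K.
Proof. induction K; simpl. rewrite Rabs_R0; lra. eapply Rle_trans. apply Rabs_triang. lra. Qed.

Section Grid.
Variables (rho : R) (l m r : nat -> nat -> R).
Hypothesis Hpart : partition rho l m r.

Lemma Hp b j : (j < 2^b)%nat ->
    l (S b) j < m (S b) j < r (S b) j /\
    Rmax (r (S b) j - m (S b) j) (m (S b) j - l (S b) j) < rho * (r (S b) j - l (S b) j) /\
    l (S (S b)) (2 * j)%nat = l (S b) j /\
    r (S (S b)) (2 * j)%nat = m (S b) j /\
    l (S (S b)) (2 * j + 1)%nat = m (S b) j /\
    r (S (S b)) (2 * j + 1)%nat = r (S b) j.
Proof.
  intros Hj. destruct Hpart as (_ & _ & _ & H). apply H. lia.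
  replace (S b - 1)%nat with b by lia. exact Hj.
Qed.

Lemma rho_pos : 0 < rho < 1.
Proof. destruct Hpart as (H & _); exact H. Qed.

Lemma pow2S b : (2 ^ S b = 2 * 2 ^ b)%nat.
Proof. simpl. lia. Qed.

Lemma pow2pos b : (0 < 2 ^ b)%nat.
Proof. induction b; simpl; lia. Qed.

Lemma evod j : (exists c, j = 2*c)%nat \/ (exists c, j = 2*c+1)%nat.
Proof. destruct (Nat.Even_or_Odd j) as [[c H]|[c H]]; [left|right]; exists c; lia. Qed.

Lemma G_lr b j : (j < 2^b)%nat -> l (S b) j < r (S b) j.
Proof. intros H; destruct (Hp b j H) as ((?&?)&_); lra. Qed.

Lemma G_adj b j : (S j < 2^b)%nat -> r (S b) j = l (S b) (S j).
Proof.
  revert j; induction b; intros j H. simpl in H; lia.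
  rewrite pow2S in H.
  destruct (evod j) as [[c ->]|[c ->]].
  - destruct (Hp b c ltac:(lia)) as (_&_&_&H2&H3&_).
    rewrite H2. replace (S (2*c))%nat with (2*c+1)%nat by lia. rewrite H3; auto.
  - destruct (Hp b c ltac:(lia)) as (_&_&_&_&_&H4).
    rewrite H4. rewrite IHb by lia.
    replace (S (2*c+1))%nat with (2*(S c))%nat by lia.
    destruct (Hp b (S c) ltac:(lia)) as (_&_&H1&_). auto.
Qed.

Lemma G_l0 b : l (S b) 0 = 0.
Proof.
  induction b. destruct Hpart as (_&H&_); exact H.
  destruct (Hp b 0 (pow2pos b)) as (_&_&H1&_). simpl in H1. rewrite H1; auto.
Qed.

Lemma G_last b : r (S b) (2^b - 1) = 1.
Proof.
  induction b. destruct Hpart as (_&_&H&_); exact H.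
  pose proof (pow2pos b).
  destruct (Hp b (2^b-1) ltac:(lia)) as (_&_&_&_&_&H4).
  replace (2^S b - 1)%nat with (2*(2^b-1)+1)%nat by (rewrite pow2S; lia). rewrite H4; auto.
Qed.

Lemma G_lmono b i j : (i <= j)%nat -> (j < 2^b)%nat -> l (S b) i <= l (S b) j.
Proof.
  intros Hij Hj. induction j. replace i with 0%nat by lia; lra.
  destruct (Nat.eq_dec i (S j)) as [->|Hne]. lra.
  specialize (IHj ltac:(lia) ltac:(lia)). rewrite <- G_adj by lia.
  pose proof (G_lr b j ltac:(lia)). lra.
Qed.

Lemma G_rl b i j : (i < j)%nat -> (j < 2^b)%nat -> r (S b) i <= l (S b) j.
Proof. intros. rewrite G_adj by lia. apply G_lmono; lia. Qed.

Lemma G_rmono b i j : (i <= j)%nat -> (j < 2^b)%nat -> r (S b) i <= r (S b) j.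
Proof.
  intros. destruct (Nat.eq_dec i j) as [->|]. lra.
  pose proof (G_rl b i j ltac:(lia) ltac:(lia)). pose proof (G_lr b j H0). lra.
Qed.

Lemma G_range b j : (j < 2^b)%nat -> 0 <= l (S b) j /\ r (S b) j <= 1.
Proof.
  intros H. split. rewrite <- (G_l0 b). apply G_lmono; lia.
  rewrite <- (G_last b). apply G_rmono; lia.
Qed.

Lemma G_mesh b j : (j < 2^b)%nat -> r (S b) j - l (S b) j <= rho ^ b.
Proof.
  revert j. induction b; intros j H.
  simpl in H. replace j with 0%nat by lia. rewrite G_l0.
  destruct Hpart as (_&_&H1&_). rewrite H1. simpl; lra.
  rewrite pow2S in H. pose proof rho_pos.
  destruct (evod j) as [[c ->]|[c ->]].
  - destruct (Hp b c ltac:(lia)) as (_&Hm&H1&H2&_).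
    rewrite H1, H2. specialize (IHb c ltac:(lia)). apply Rmax_Rlt in Hm.
    simpl. assert (rho * (r (S b) c - l (S b) c) <= rho * rho^b) by (apply Rmult_le_compat_l; lra). lra.
  - destruct (Hp b c ltac:(lia)) as (_&Hm&_&_&H3&H4).
    rewrite H3, H4. specialize (IHb c ltac:(lia)). apply Rmax_Rlt in Hm.
    simpl. assert (rho * (r (S b) c - l (S b) c) <= rho * rho^b) by (apply Rmult_le_compat_l; lra). lra.
Qed.

Lemma G_parent b j : (j < 2^(S b))%nat -> exists c, (c < 2^b)%nat /\
   l (S b) c <= l (S (S b)) j /\ r (S (S b)) j <= r (S b) c.
Proof.
  intros H. rewrite pow2S in H.
  destruct (evod j) as [[c ->]|[c ->]]; exists c; split; try lia;
  destruct (Hp b c ltac:(lia)) as ((?&?)&_&H1&H2&H3&H4).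
  rewrite H1, H2; lra. rewrite H3, H4; lra.
Qed.

Lemma sep_l d b i j : (i < 2^b)%nat -> (j < 2^(d+b))%nat ->
   r (S (d+b)) j <= l (S b) i \/ l (S b) i <= l (S (d+b)) j.
Proof.
  revert j. induction d; intros j Hi Hj; cbn [Nat.add] in *.
  - destruct (Nat.lt_ge_cases j i). left; apply G_rl; lia. right; apply G_lmono; lia.
  - destruct (G_parent (d+b) j Hj) as (c & Hc & H1 & H2).
    destruct (IHd c Hi Hc); [left|right]; lra.
Qed.

Lemma sep_r d b i j : (i < 2^b)%nat -> (j < 2^(d+b))%nat ->
   r (S (d+b)) j <= r (S b) i \/ r (S b) i <= l (S (d+b)) j.
Proof.
  revert j. induction d; intros j Hi Hj; cbn [Nat.add] in *.
  - destruct (Nat.le_gt_cases j i). left; apply G_rmono; lia. right; apply G_rl; lia.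
  - destruct (G_parent (d+b) j Hj) as (c & Hc & H1 & H2).
    destruct (IHd c Hi Hc); [left|right]; lra.
Qed.

Lemma classify b k N j : (k < 2^b)%nat -> (S b <= N)%nat -> (j < 2^N)%nat ->
  let a := l (S N) j in let c := r (S N) j in
  c <= l (S b) k \/ r (S b) k <= a \/
  (l (S b) k <= a /\ c <= m (S b) k) \/ (m (S b) k <= a /\ c <= r (S b) k).
Proof.
  intros Hk HN Hj a c.
  destruct (Hp b k Hk) as ((?&?)&_&H1&H2&H3&H4).
  pose proof (G_lr N j Hj) as Hac. fold a c in Hac.
  assert (E : N = ((N - S b) + S b)%nat) by lia.
  assert (Hj' : (j < 2^((N - S b) + S b))%nat) by (rewrite <- E; auto).
  assert (k1 : (2*k < 2^(S b))%nat) by (rewrite pow2S; lia).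
  assert (k2 : (2*k+1 < 2^(S b))%nat) by (rewrite pow2S; lia).
  pose proof (sep_l (N - S b) (S b) _ _ k1 Hj') as S1.
  pose proof (sep_l (N - S b) (S b) _ _ k2 Hj') as S2.
  pose proof (sep_r (N - S b) (S b) _ _ k2 Hj') as S3.
  rewrite <- E in S1, S2, S3. fold a c in S1, S2, S3.
  rewrite H1 in S1. rewrite H3 in S2. rewrite H4 in S3.
  destruct S1 as [S1|S1]. left; auto.
  destruct S3 as [S3|S3]; [|right; left; auto].
  destruct S2 as [S2|S2]; right; right; [left|right]; split; auto.
Qed.

Lemma tele_gen b (G : R -> R) K : (1 <= K)%nat -> (K <= 2^b)%nat ->
  ssum (fun j => G (r (S b) j) - G (l (S b) j)) K = G (r (S b) (K-1)) - G (l (S b) 0).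
Proof.
  induction K as [|K IH]; intros H1 H2. lia.
  destruct K as [|K']. simpl. lra.
  rewrite ssum_S. rewrite IH by lia. replace (S K' - 1)%nat with K' by lia.
  rewrite (G_adj b K') by lia. replace (S (S K') - 1)%nat with (S K') by lia. lra.
Qed.

Lemma tele b (G : R -> R) :
  ssum (fun j => G (r (S b) j) - G (l (S b) j)) (2^b) = G 1 - G 0.
Proof.
  pose proof (pow2pos b). rewrite tele_gen by lia. rewrite G_last, G_l0. auto.
Qed.

End Grid.

Lemma alg_id g h1 h2 a b c a' b' c' : 0 < g -> 0 < h1 -> 0 < h2 ->
  let s := g * sqrt (h1*h2/(h1+h2)) in
  (b-a)*(b'-a')/h1 + (c-b)*(c'-b')/h2 =
  (c-a)*(c'-a')/(h1+h2) +
  ((g/s)*b - (s/(g*h1))*a - (s/(g*h2))*c) * ((g/s)*b' - (s/(g*h1))*a' - (s/(g*h2))*c').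
Proof.
  intros Hg H1 H2 s.
  set (q := sqrt (h1*h2/(h1+h2))).
  assert (Hq0 : 0 < q) by (apply sqrt_lt_R0; apply Rdiv_lt_0_compat; nra).
  assert (Hq : q*q = h1*h2/(h1+h2)) by (apply sqrt_sqrt; apply Rlt_le, Rdiv_lt_0_compat; nra).
  assert (E1 : g/s = q*(1/h1+1/h2)).
  { unfold s; fold q. apply Rmult_eq_reg_l with q; [|lra].
    replace (q * (g / (g*q))) with 1 by (field; lra).
    replace (q * (q * (1/h1+1/h2))) with ((q*q)*(1/h1+1/h2)) by ring. rewrite Hq. field; lra. }
  assert (E2 : s/(g*h1) = q/h1) by (unfold s; fold q; field; lra).
  assert (E3 : s/(g*h2) = q/h2) by (unfold s; fold q; field; lra).
  rewrite E1, E2, E3.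
  replace ((q * (1 / h1 + 1 / h2) * b - q / h1 * a - q / h2 * c) *
   (q * (1 / h1 + 1 / h2) * b' - q / h1 * a' - q / h2 * c'))
   with ((q*q) * ((b-a)/h1 - (c-b)/h2) * ((b'-a')/h1 - (c'-b')/h2)) by (field; lra).
  rewrite Hq. field; lra.
Qed.

Section Alg.
Variables (beta sG : R -> R) (rho : R) (l m r : nat -> nat -> R).
Hypothesis Hpart : partition rho l m r.
Hypothesis Hhpos : forall a b, 0 <= a -> a < b -> b <= 1 -> 0 < hint beta sG a b.
Variables (x y : R -> R).
Hypothesis Hx0 : x 0 = 0.
Hypothesis Hy0 : y 0 = 0.

Let g := gfun beta.
Let X t := x t / g t.
Let Y t := y t / g t.

Definition Tm (a j : nat) : R :=
  (X (r a j) - X (l a j)) * (Y (r a j) - Y (l a j)) / hint beta sG (l a j) (r a j).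

Lemma gpos t : 0 < g t.
Proof. unfold g, gfun. apply exp_pos. Qed.

Lemma Delta_S b k z : Defs.Delta beta sG l m r (S b) k z =
  (gfun beta (m (S b) k) / Defs.sigma beta sG l m r (S b) k) * (z (m (S b) k) / g (m (S b) k))
  - (Defs.sigma beta sG l m r (S b) k / (g (m (S b) k) * hint beta sG (l (S b) k) (m (S b) k))) * (z (l (S b) k) / g (l (S b) k))
  - (Defs.sigma beta sG l m r (S b) k / (g (m (S b) k) * hint beta sG (m (S b) k) (r (S b) k))) * (z (r (S b) k) / g (r (S b) k)).
Proof.
  unfold Defs.Delta, Mc, Lc, Rc. simpl Nat.eqb. cbv iota. unfold g. unfold Rdiv. ring.
Qed.

Lemma step_id b k : (k < 2^b)%nat ->
  Tm (S (S b)) (2*k) + Tm (S (S b)) (2*k+1) =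
  Tm (S b) k + Defs.Delta beta sG l m r (S b) k x * Defs.Delta beta sG l m r (S b) k y.
Proof.
  intros Hk. destruct (Hp rho l m r Hpart b k Hk) as ((Hlm&Hmr)&_&H1&H2&H3&H4).
  pose proof (G_range rho l m r Hpart b k Hk) as (R1 & R2).
  unfold Tm. rewrite H1, H2, H3, H4. rewrite !Delta_S.
  unfold Defs.sigma. simpl Nat.eqb. cbv iota. fold g.
  assert (E : hint beta sG (l (S b) k) (r (S b) k) =
     hint beta sG (l (S b) k) (m (S b) k) + hint beta sG (m (S b) k) (r (S b) k)) by (unfold hint; ring).
  rewrite E.
  apply alg_id. apply gpos. apply Hhpos; lra. apply Hhpos; lra.
Qed.

Lemma alg_main N :
  sumI (fun i j => Defs.Delta beta sG l m r i j x * Defs.Delta beta sG l m r i j y) N = ssum (Tm (S N)) (2^N).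
Proof.
  induction N.
  - unfold sumI. simpl. unfold Tm, Defs.Delta, Lc, Defs.sigma. simpl Nat.eqb. cbv iota.
    rewrite (G_l0 rho l m r Hpart 0). destruct Hpart as (_&_&H1&_). rewrite H1.
    unfold X, Y. fold g. rewrite Hx0, Hy0.
    assert (Hh : 0 < hint beta sG 0 1) by (apply Hhpos; lra).
    assert (Hs := sqrt_lt_R0 _ Hh). assert (Hss := sqrt_sqrt _ (Rlt_le _ _ Hh)).
    pose proof (gpos 1). pose proof (gpos 0).
    replace (g 1 * sqrt (hint beta sG 0 1) / (g 1 * hint beta sG 0 1) * x 1 / g 1 *
     (g 1 * sqrt (hint beta sG 0 1) / (g 1 * hint beta sG 0 1) * y 1 / g 1))
     with ((sqrt (hint beta sG 0 1) * sqrt (hint beta sG 0 1)) * (x 1 / g 1) * (y 1/ g 1) / (hint beta sG 0 1 * hint beta sG 0 1)) by (field; lra).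
    rewrite Hss. field; lra.
  - unfold sumI in *. rewrite tech5. rewrite IHN. clear IHN.
    unfold level_size. simpl Nat.eqb. cbv iota. replace (S N - 1)%nat with N by lia.
    pose proof (pow2pos N).
    replace (2^N - 1)%nat with (Nat.pred (2^N)) by lia.
    rewrite sum_f_R0_ssum. replace (S (Nat.pred (2^N))) with (2^N)%nat by lia.
    rewrite pow2S. rewrite ssum_pairs. rewrite <- ssum_plus.
    apply ssum_ext. intros j Hj. rewrite step_id by auto. reflexivity.
Qed.

End Alg.

Ltac rring := match goal with |- ?a = ?b => change (@eq R a b) end; ring.

Lemma cmul (f g : R -> R) (x : R) : continuous f x -> continuous g x -> continuous (fun t => f t * g t) x.
Proof. intros; apply (continuous_mult f g); auto. Qed.
Lemma cplus (f g : R -> R) (x : R) : continuous f x -> continuous g x -> continuous (fun t => f t + g t) x.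
Proof. intros; apply (continuous_plus f g); auto. Qed.
Lemma cminus (f g : R -> R) (x : R) : continuous f x -> continuous g x -> continuous (fun t => f t - g t) x.
Proof. intros; apply (continuous_minus f g); auto. Qed.
Lemma cconst (c : R) (x : R) : continuous (fun _ => c) x.
Proof. apply continuous_const. Qed.
Lemma cinv (f : R -> R) (x : R) : continuous f x -> f x <> 0 -> continuous (fun t => / f t) x.
Proof.
  intros H Hn. apply continuity_pt_filterlim. apply (continuity_pt_inv f); auto.
  apply continuity_pt_filterlim; auto.
Qed.
Lemma cdiv (f g : R -> R) (x : R) : continuous f x -> continuous g x -> g x <> 0 -> continuous (fun t => f t / g t) x.
Proof. intros. unfold Rdiv. apply cmul; auto. apply cinv; auto. Qed.
Lemma cpow2 (f : R -> R) (x : R) : continuous f x -> continuous (fun t => f t ^ 2) x.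
Proof. intros H. apply (continuous_ext (fun t => f t * f t)). intros t; simpl; ring. apply cmul; auto. Qed.
Lemma cexp (f : R -> R) (x : R) : continuous f x -> continuous (fun t => exp (f t)) x.
Proof. intros. apply (continuous_comp f exp); auto. apply continuous_exp. Qed.

Ltac cont := intros; repeat match goal with
 | |- continuous (fun t => _ * _) _ => apply cmul
 | |- continuous (fun t => _ + _) _ => apply cplus
 | |- continuous (fun t => _ - _) _ => apply cminus
 | |- continuous (fun t => _ ^ 2) _ => apply cpow2
 | |- continuous (fun t => exp _) _ => apply cexp
 | |- continuous (fun _ => ?c) _ => apply cconst
 | |- continuous (fun t => ?f t) _ => change (continuous f _)
 | H : forall t, continuous ?f t |- continuous ?f _ => apply H
 | H : forall i t, continuous (?V i) t |- continuous (?V _) _ => apply H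
 end.

Lemma RInt_add (f g : R -> R) a b : ex_RInt f a b -> ex_RInt g a b ->
  RInt (fun t => f t + g t) a b = RInt f a b + RInt g a b.
Proof. intros. apply (RInt_plus f g); auto. Qed.
Lemma RInt_sub (f g : R -> R) a b : ex_RInt f a b -> ex_RInt g a b ->
  RInt (fun t => f t - g t) a b = RInt f a b - RInt g a b.
Proof. intros. apply (RInt_minus f g); auto. Qed.
Lemma RInt_cmul c (f : R -> R) a b : ex_RInt f a b -> RInt (fun t => c * f t) a b = c * RInt f a b.
Proof. intros. apply (RInt_scal f a b c); auto. Qed.
Lemma exRI (f : R -> R) a b : (forall t, continuous f t) -> ex_RInt f a b.
Proof. intros H; apply (@ex_RInt_continuous R_CompleteNormedModule); intros; apply H. Qed.

Lemma RInt_abs_bound (f g : R -> R) a b : a <= b -> ex_RInt f a b -> ex_RInt g a b ->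
  (forall t, a < t < b -> Rabs (f t) <= g t) -> Rabs (RInt f a b) <= RInt g a b.
Proof.
  intros Hab Hf Hg H. eapply Rle_trans. apply abs_RInt_le; auto.
  destruct (Req_dec a b) as [->|Hne]. rewrite !RInt_point. lra.
  apply RInt_le; auto. apply ex_RInt_norm; auto. 
Qed.

Lemma interval_err (f Vx Vy : R -> R) a b d :
  a < b -> (forall t, continuous f t) -> (forall t, continuous Vx t) -> (forall t, continuous Vy t) ->
  (forall t, a <= t <= b -> Rabs (Vx t - Vx a) <= d) ->
  (forall t, a <= t <= b -> Rabs (Vy t - Vy a) <= d) ->
  0 < RInt (fun t => f t ^ 2) a b ->
  Rabs (RInt (fun t => f t ^ 2 * Vx t) a b * RInt (fun t => f t ^ 2 * Vy t) a b / RInt (fun t => f t ^ 2) a b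
        - RInt (fun t => f t ^ 2 * Vx t * Vy t) a b) <= 2 * d^2 * RInt (fun t => f t ^ 2) a b.
Proof.
  intros Hab Hf HVx HVy Bx By HA.
  set (w := fun t => f t ^ 2). set (A := RInt w a b).
  set (cx := Vx a). set (cy := Vy a).
  assert (Cw : forall t, continuous w t) by (intros; apply cpow2; auto).
  set (Ex := RInt (fun t => w t * (Vx t - cx)) a b).
  set (Ey := RInt (fun t => w t * (Vy t - cy)) a b).
  set (Exy := RInt (fun t => w t * ((Vx t - cx) * (Vy t - cy))) a b).
  assert (Ix : RInt (fun t => f t ^ 2 * Vx t) a b = cx * A + Ex).
  { unfold Ex, A. rewrite <- RInt_cmul by (apply exRI; auto). rewrite <- RInt_add.
    apply RInt_ext; intros; unfold w; rring.
    apply exRI; intros; apply cmul; auto; apply cconst.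
    apply exRI; intros; apply cmul; auto; apply cminus; auto; apply cconst. }
  assert (Iy : RInt (fun t => f t ^ 2 * Vy t) a b = cy * A + Ey).
  { unfold Ey, A. rewrite <- RInt_cmul by (apply exRI; auto). rewrite <- RInt_add.
    apply RInt_ext; intros; unfold w; rring.
    apply exRI; intros; apply cmul; auto; apply cconst.
    apply exRI; intros; apply cmul; auto; apply cminus; auto; apply cconst. }
  assert (Ixy : RInt (fun t => f t ^ 2 * Vx t * Vy t) a b = cx * cy * A + cx * Ey + cy * Ex + Exy).
  { unfold Ex, Ey, Exy, A.
    rewrite <- !RInt_cmul by (apply exRI; intros; cont).
    rewrite <- !RInt_add; try (apply exRI; intros; cont).
    apply RInt_ext; intros; unfold w; rring. }
  assert (Cd : forall t, continuous (fun _ : R => d) t) by (intros; apply cconst).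
  assert (Hd : 0 <= d) by (specialize (Bx a ltac:(lra)); pose proof (Rabs_pos (Vx a - Vx a)); lra).
  assert (BEx : Rabs Ex <= d * A).
  { unfold Ex, A. rewrite <- RInt_cmul by (apply exRI; auto).
    apply RInt_abs_bound; try lra.
    apply exRI; intros; apply cmul; auto; apply cminus; auto; apply cconst.
    apply exRI; intros; apply cmul; auto.
    intros t Ht. rewrite Rabs_mult. unfold w. rewrite Rabs_right by (apply Rle_ge; apply pow2_ge_0).
    rewrite Rmult_comm. apply Rmult_le_compat_r. apply pow2_ge_0. apply Bx; lra. }
  assert (BEy : Rabs Ey <= d * A).
  { unfold Ey, A. rewrite <- RInt_cmul by (apply exRI; auto).
    apply RInt_abs_bound; try lra.
    apply exRI; intros; apply cmul; auto; apply cminus; auto; apply cconst.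
    apply exRI; intros; apply cmul; auto.
    intros t Ht. rewrite Rabs_mult. unfold w. rewrite Rabs_right by (apply Rle_ge; apply pow2_ge_0).
    rewrite Rmult_comm. apply Rmult_le_compat_r. apply pow2_ge_0. apply By; lra. }
  assert (BExy : Rabs Exy <= d^2 * A).
  { unfold Exy, A. rewrite <- RInt_cmul by (apply exRI; auto).
    apply RInt_abs_bound; try lra.
    apply exRI; intros; cont.
    apply exRI; cont.
    intros t Ht. rewrite Rabs_mult. unfold w. rewrite Rabs_right by (apply Rle_ge; apply pow2_ge_0).
    rewrite Rmult_comm. apply Rmult_le_compat_r. apply pow2_ge_0. rewrite Rabs_mult.
    specialize (Bx t ltac:(lra)); specialize (By t ltac:(lra)). simpl. rewrite Rmult_1_r.
    apply Rmult_le_compat; auto using Rabs_pos. }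
  fold w A. rewrite Ix, Iy, Ixy. assert (HA2 : 0 < A) by exact HA. clear HA.
  replace ((cx * A + Ex) * (cy * A + Ey) / A - (cx * cy * A + cx * Ey + cy * Ex + Exy))
    with (Ex * Ey / A - Exy) by (field; lra).
  eapply Rle_trans. apply Rabs_triang. rewrite Rabs_Ropp.
  assert (Rabs (Ex * Ey / A) <= d^2 * A).
  { unfold Rdiv. rewrite !Rabs_mult. rewrite Rabs_inv, (Rabs_right A) by lra.
    apply Rmult_le_reg_r with A; auto.
    replace (Rabs Ex * Rabs Ey * / A * A) with (Rabs Ex * Rabs Ey) by (field; lra).
    replace (d^2*A*A) with ((d*A)*(d*A)) by ring.
    apply Rmult_le_compat; auto using Rabs_pos. }
  lra.
Qed.

Lemma unifK (V : nat -> R -> R) K : (forall i t, continuous (V i) t) ->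
  forall d, 0 < d -> exists e, 0 < e /\ forall i, (i < K)%nat -> forall s t, 0 <= s <= 1 -> 0 <= t <= 1 ->
     Rabs (s - t) < e -> Rabs (V i s - V i t) < d.
Proof.
  intros HV d Hd. induction K.
  - exists 1. split. lra. intros; lia.
  - destruct IHK as (e1 & He1 & H1).
    assert (Hc : forall x, 0 <= x <= 1 -> continuity_pt (V K) x).
    { intros x _. apply continuity_pt_filterlim. apply HV. }
    destruct (Heine_cor2 Hc (mkposreal d Hd)) as ((e2 & He2) & H2). simpl in H2.
    exists (Rmin e1 e2). split. apply Rmin_pos; auto.
    intros i Hi s t Hs Ht Hst. destruct (Nat.eq_dec i K) as [->|Hne].
    apply H2; auto. pose proof (Rmin_r e1 e2); lra.
    apply H1; auto. lia. pose proof (Rmin_l e1 e2); lra.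
Qed.

Section Conv.
Variables (rho : R) (l m r : nat -> nat -> R).
Hypothesis Hpart : partition rho l m r.

Lemma tele_int_gen b (F : R -> R) K :
  (forall j, (j < 2^b)%nat -> ex_RInt F (l (S b) j) (r (S b) j)) ->
  (1 <= K)%nat -> (K <= 2^b)%nat ->
  ex_RInt F 0 (r (S b) (K-1)) /\
  ssum (fun j => RInt F (l (S b) j) (r (S b) j)) K = RInt F 0 (r (S b) (K-1)).
Proof.
  intros HF. induction K as [|K IH]; intros H1 H2. lia.
  destruct K as [|K'].
  - simpl. rewrite (G_l0 rho l m r Hpart b). split. rewrite <- (G_l0 rho l m r Hpart b). apply HF; lia. lra.
  - destruct (IH ltac:(lia) ltac:(lia)) as (E1 & E2). rewrite ssum_S, E2.
    replace (S K' - 1)%nat with K' in * by lia. replace (S (S K') - 1)%nat with (S K') by lia.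
    assert (E3 : ex_RInt F (r (S b) K') (r (S b) (S K'))).
    { rewrite (G_adj rho l m r Hpart b K') by lia. apply HF; lia. }
    split. eapply ex_RInt_Chasles; eauto.
    rewrite (G_adj rho l m r Hpart b K') by lia. rewrite <- (G_adj rho l m r Hpart b K') by lia.
    symmetry. rewrite <- (RInt_Chasles F 0 (r (S b) K')); auto.
Qed.

Lemma tele_int b (F : R -> R) :
  (forall j, (j < 2^b)%nat -> ex_RInt F (l (S b) j) (r (S b) j)) ->
  ssum (fun j => RInt F (l (S b) j) (r (S b) j)) (2^b) = RInt F 0 1.
Proof.
  intros HF. pose proof (pow2pos b).
  destruct (tele_int_gen b F (2^b) HF ltac:(lia) ltac:(lia)) as (_ & E).
  rewrite E. rewrite (G_last rho l m r Hpart b). auto.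
Qed.

Variables (f : R -> R) (X Y ux uy : R -> R) (Vx Vy : nat -> R -> R) (N0 : nat).
Hypothesis Hf : forall t, continuous f t.
Hypothesis Hfp : forall t, 0 < f t.
Hypothesis HVx : forall i t, continuous (Vx i) t.
Hypothesis HVy : forall i t, continuous (Vy i) t.
Hypothesis HregX : forall N j, (N0 <= N)%nat -> (j < 2^N)%nat -> exists i, (i < 3)%nat /\
  X (r (S N) j) - X (l (S N) j) = RInt (fun t => f t ^ 2 * Vx i t) (l (S N) j) (r (S N) j) /\
  forall t, l (S N) j < t < r (S N) j -> ux t = f t * Vx i t.
Hypothesis HregY : forall N j, (N0 <= N)%nat -> (j < 2^N)%nat -> exists i, (i < 3)%nat /\
  Y (r (S N) j) - Y (l (S N) j) = RInt (fun t => f t ^ 2 * Vy i t) (l (S N) j) (r (S N) j) /\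
  forall t, l (S N) j < t < r (S N) j -> uy t = f t * Vy i t.

Lemma Apos a b : a < b -> 0 < RInt (fun t => f t ^ 2) a b.
Proof.
  intros Hab. apply RInt_gt_0; auto. intros. pose proof (Hfp x). apply pow_lt; lra.
  intros; apply cpow2; auto.
Qed.

Theorem conv_main :
  is_lim_seq (fun N => ssum (fun j =>
      (X (r (S N) j) - X (l (S N) j)) * (Y (r (S N) j) - Y (l (S N) j)) /
      RInt (fun t => f t ^ 2) (l (S N) j) (r (S N) j)) (2^N))
    (RInt (fun t => ux t * uy t) 0 1).
Proof.
  apply is_lim_seq_spec. intros eps.
  set (Hw := RInt (fun t => f t ^ 2) 0 1).
  assert (HHw : 0 < Hw) by (apply Apos; lra).
  set (d := Rmin (1/2) (eps / (2*Hw+2))).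
  assert (Hd : 0 < d) by (apply Rmin_pos; [lra| apply Rdiv_lt_0_compat; [apply cond_pos|lra]]).
  destruct (unifK Vx 3 HVx d Hd) as (e1 & He1 & U1).
  destruct (unifK Vy 3 HVy d Hd) as (e2 & He2 & U2).
  pose proof (rho_pos rho l m r Hpart) as Hrho.
  destruct (pow_lt_1_zero rho ltac:(rewrite Rabs_right; lra) (Rmin e1 e2) ltac:(apply Rmin_pos; auto)) as (N1 & HN1).
  exists (max N0 N1). intros N HN.
  assert (HjR : forall j, (j < 2^N)%nat -> 0 <= l (S N) j /\ r (S N) j <= 1 /\ l (S N) j < r (S N) j /\
            r (S N) j - l (S N) j < Rmin e1 e2).
  { intros j Hj. destruct (G_range rho l m r Hpart N j Hj). pose proof (G_lr rho l m r Hpart N j Hj).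
    pose proof (G_mesh rho l m r Hpart N j Hj). specialize (HN1 N ltac:(lia)).
    rewrite Rabs_right in HN1 by (apply Rle_ge, pow_le; lra). repeat split; lra. }
  rewrite <- (tele_int N).
  2:{ intros j Hj. destruct (HregX N j ltac:(lia) Hj) as (ix & Hix & _ & Ux).
      destruct (HregY N j ltac:(lia) Hj) as (iy & Hiy & _ & Uy).
      apply (ex_RInt_ext (fun t => f t ^ 2 * Vx ix t * Vy iy t)).
      intros t Ht. rewrite Rmin_left, Rmax_right in Ht by (destruct (HjR j Hj) as (?&?&?&?); lra).
      rewrite Ux, Uy by lra. simpl; ring.
      apply exRI. cont. }
  rewrite <- ssum_minus.
  eapply Rle_lt_trans. apply ssum_abs.
  eapply Rle_lt_trans. apply ssum_le with (g := fun j => 2 * d^2 * RInt (fun t => f t ^ 2) (l (S N) j) (r (S N) j)).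
  - intros j Hj. destruct (HjR j Hj) as (R1 & R2 & R3 & R4).
    destruct (HregX N j ltac:(lia) Hj) as (ix & Hix & Dx & Ux).
    destruct (HregY N j ltac:(lia) Hj) as (iy & Hiy & Dy & Uy).
    rewrite Dx, Dy.
    rewrite (RInt_ext (fun t => ux t * uy t) (fun t => f t ^ 2 * Vx ix t * Vy iy t)).
    2:{ intros t Ht. rewrite Rmin_left, Rmax_right in Ht by lra. rewrite Ux, Uy by lra. simpl; ring. }
    apply interval_err; auto.
    + intros t Ht. apply Rlt_le. apply U1; auto; try lra. rewrite Rabs_right by lra. pose proof (Rmin_l e1 e2). lra.
    + intros t Ht. apply Rlt_le. apply U2; auto; try lra. rewrite Rabs_right by lra. pose proof (Rmin_r e1 e2). lra.
    + apply Apos; auto.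
  - rewrite ssum_scal. rewrite tele_int.
    2:{ intros j Hj. apply exRI. cont. }
    fold Hw.
    assert (d <= 1/2) by apply Rmin_l.
    assert (d <= eps / (2*Hw+2)) by apply Rmin_r.
    assert (d * Hw <= eps / (2*Hw+2) * Hw) by (apply Rmult_le_compat_r; lra).
    assert (eps / (2*Hw+2) * Hw < eps).
    { pose proof (cond_pos eps). assert (Hq : 0 < 2*Hw+2) by lra.
      apply Rmult_lt_reg_r with (2*Hw+2). exact Hq.
      replace (eps / (2*Hw+2) * Hw * (2*Hw+2)) with (eps * Hw).
      nra. field. apply Rgt_not_eq; exact Hq. }
    assert (2 * d^2 * Hw <= d * Hw).
    { replace (2*d^2*Hw) with ((2*d)*(d*Hw)) by ring.
      assert (0 <= d*Hw) by (apply Rlt_le, Rmult_lt_0_compat; lra).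
      rewrite <- (Rmult_1_l (d*Hw)) at 2. apply Rmult_le_compat_r; lra. }
    lra.
Qed.

End Conv.

Definition clamp (t : R) : R := Rmin 1 (Rmax 0 t).

Lemma clamp_id t : 0 <= t <= 1 -> clamp t = t.
Proof. intros H. unfold clamp, Rmin, Rmax. repeat destruct Rle_dec; lra. Qed.

Lemma clamp_range t : 0 <= clamp t <= 1.
Proof. unfold clamp, Rmin, Rmax. repeat destruct Rle_dec; lra. Qed.

Lemma clamp_lip s t : Rabs (clamp s - clamp t) <= Rabs (s - t).
Proof.
  unfold clamp, Rmin, Rmax. unfold Rabs. repeat (destruct Rle_dec); repeat (destruct Rcase_abs); lra.
Qed.

Lemma Rpower_gt0 x y : 0 < Rpower x y.
Proof. unfold Rpower; apply exp_pos. Qed.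

Lemma holder_cont f : holder01 f -> forall t, continuous (fun s => f (clamp s)) t.
Proof.
  intros (C & a & Ha & H) t. apply continuity_pt_filterlim.
  unfold continuity_pt, continue_in, limit1_in, limit_in. intros eps Heps. simpl.
  set (dl := Rpower (eps / (Rabs C + 1)) (1/a)).
  assert (HC : 0 < Rabs C + 1) by (pose proof (Rabs_pos C); lra).
  exists dl. split. apply Rpower_gt0.
  intros x (_ & Hx). unfold R_dist in *.
  pose proof (clamp_lip x t) as Hl.
  destruct (Req_dec (clamp x) (clamp t)) as [E|NE].
  - rewrite E. replace (f (clamp t) - f (clamp t)) with 0 by ring. rewrite Rabs_R0; lra.
  - assert (Hu : 0 < Rabs (clamp x - clamp t)) by (apply Rabs_pos_lt; lra).
    eapply Rle_lt_trans. apply H; apply clamp_range.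
    assert (P1 : Rpower (Rabs (clamp x - clamp t)) a < Rpower dl a).
    { apply Rlt_Rpower_l. lra. split; auto. lra. }
    assert (P2 : Rpower dl a = eps / (Rabs C + 1)).
    { unfold dl. rewrite Rpower_mult. replace (1/a*a) with 1 by (field; lra).
      apply Rpower_1. apply Rdiv_lt_0_compat; lra. }
    rewrite P2 in P1.
    pose proof (Rpower_gt0 (Rabs (clamp x - clamp t)) a) as P3.
    assert (C * Rpower (Rabs (clamp x - clamp t)) a <= Rabs C * Rpower (Rabs (clamp x - clamp t)) a)
      by (apply Rmult_le_compat_r; [lra| apply Rle_abs]).
    assert (Rabs C * Rpower (Rabs (clamp x - clamp t)) a <= Rabs C * (eps / (Rabs C + 1)))
      by (apply Rmult_le_compat_l; [apply Rabs_pos|lra]).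
    assert (Rabs C * (eps / (Rabs C + 1)) < eps).
    { apply Rmult_lt_reg_r with (Rabs C + 1); auto.
      replace (Rabs C * (eps / (Rabs C + 1)) * (Rabs C + 1)) with (Rabs C * eps) by (field; lra). nra. }
    lra.
Qed.

Section Hat.
Variables (gam sG : R -> R).

Definition gh (t : R) : R := gam (clamp t).
Definition sh (t : R) : R := sG (clamp t).
Definition Gh (t : R) : R := RInt gh 0 t.
Definition gH (t : R) : R := exp (Gh t).
Definition fH (t : R) : R := sh t * exp (- Gh t).
Definition hH (t : R) : R := RInt (fun s => fH s ^ 2) 0 t.

Hypothesis Hg : holder01 gam.
Hypothesis Hs : holder01 sG.
Hypothesis Hsp : forall t, 0 <= t <= 1 -> 0 < sG t.

Lemma gh_cont t : continuous gh t.
Proof. apply holder_cont; auto. Qed.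
Lemma sh_cont t : continuous sh t.
Proof. apply holder_cont; auto. Qed.
Lemma sh_pos t : 0 < sh t.
Proof. unfold sh. apply Hsp, clamp_range. Qed.

Lemma Gh_deriv t : is_derive Gh t (gh t).
Proof.
  apply (is_derive_RInt gh Gh 0 t). apply filter_forall. intros b.
  apply (@RInt_correct R_CompleteNormedModule). apply exRI. intros; apply gh_cont.
  apply gh_cont.
Qed.
Lemma Gh_cont t : continuous Gh t.
Proof. apply (@ex_derive_continuous R_AbsRing R_NormedModule). eexists; apply Gh_deriv. Qed.
Lemma fH_cont t : continuous fH t.
Proof. unfold fH. apply cmul. apply sh_cont. apply cexp. apply (continuous_opp Gh). apply Gh_cont. Qed.
Lemma fH_pos t : 0 < fH t.
Proof. unfold fH. apply Rmult_lt_0_compat. apply sh_pos. apply exp_pos. Qed.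
Lemma hH_deriv t : is_derive hH t (fH t ^ 2).
Proof.
  apply (is_derive_RInt (fun s => fH s ^ 2) hH 0 t). apply filter_forall. intros b.
  apply (@RInt_correct R_CompleteNormedModule). apply exRI. intros; apply cpow2, fH_cont.
  apply cpow2, fH_cont.
Qed.

Lemma Gh_eq t : 0 <= t <= 1 -> RInt gam 0 t = Gh t.
Proof.
  intros Ht. unfold Gh. apply RInt_ext. intros x Hx. unfold gh. rewrite clamp_id; auto.
  rewrite Rmin_left, Rmax_right in Hx by lra. lra.
Qed.
Lemma gfun_eq t : 0 <= t <= 1 -> gfun gam t = gH t.
Proof. intros; unfold gfun, gH; rewrite Gh_eq; auto. Qed.
Lemma ffun_eq t : 0 <= t <= 1 -> ffun gam sG t = fH t.
Proof. intros; unfold ffun, fH, sh; rewrite Gh_eq, clamp_id; auto. Qed.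
Lemma hfun_eq t : 0 <= t <= 1 -> hfun gam sG t = hH t.
Proof.
  intros Ht. unfold hfun, hH. apply RInt_ext. intros x Hx.
  rewrite Rmin_left, Rmax_right in Hx by lra. rewrite ffun_eq; auto; lra.
Qed.
Lemma hint_eq a b : 0 <= a <= 1 -> 0 <= b <= 1 -> hint gam sG a b = hH b - hH a.
Proof. intros; unfold hint; rewrite !hfun_eq; auto. Qed.
Lemma hH_diff a b : hH b - hH a = RInt (fun s => fH s ^ 2) a b.
Proof.
  unfold hH. rewrite <- (RInt_Chasles (fun s => fH s ^ 2) 0 a b).
  change (plus ?x ?y) with (x + y). ring.
  apply exRI; intros; apply cpow2, fH_cont. apply exRI; intros; apply cpow2, fH_cont.
Qed.
Lemma hint_int a b : 0 <= a <= 1 -> 0 <= b <= 1 -> hint gam sG a b = RInt (fun s => fH s ^ 2) a b.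
Proof. intros; rewrite hint_eq, hH_diff; auto. Qed.
Lemma hint_pos a b : 0 <= a -> a < b -> b <= 1 -> 0 < hint gam sG a b.
Proof.
  intros. rewrite hint_int by lra. apply RInt_gt_0; auto.
  intros. pose proof (fH_pos x). apply pow_lt; lra.
  intros; apply cpow2, fH_cont.
Qed.

End Hat.

Ltac rring_f := match goal with |- ?a = ?b => change (@eq R a b) end.

Section Piece.
Variables (alpha beta sG : R -> R).
Hypothesis Ha : holder01 alpha.
Hypothesis Hb : holder01 beta.
Hypothesis Hs : holder01 sG.
Hypothesis Hsp : forall t, 0 <= t <= 1 -> 0 < sG t.

Definition EE (t : R) : R := exp (Gh alpha t - Gh beta t).
Definition Pd (H Hd : R -> R) (t : R) : R :=
  (gh alpha t - gh beta t) * EE t * H t + EE t * Hd t.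
Definition Vf (H Hd : R -> R) (t : R) : R := Pd H Hd t / fH beta sG t ^ 2.

Lemma EE_cont t : continuous EE t.
Proof. unfold EE. apply cexp. apply cminus; apply Gh_cont; auto. Qed.

Lemma EE_deriv t : is_derive EE t ((gh alpha t - gh beta t) * EE t).
Proof.
  unfold EE. apply (is_derive_comp exp (fun s => Gh alpha s - Gh beta s)).
  apply is_derive_exp. apply (is_derive_minus (Gh alpha) (Gh beta)); apply Gh_deriv; auto.
Qed.

Lemma Vf_cont H Hd t : (forall s, is_derive H s (Hd s)) -> (forall s, continuous Hd s) ->
  continuous (Vf H Hd) t.
Proof.
  intros HH HHd. assert (CH : forall s, continuous H s).
  { intros s. apply (@ex_derive_continuous R_AbsRing R_NormedModule). eexists; apply HH. }
  unfold Vf, Pd. apply cdiv. apply cplus. apply cmul. apply cmul. apply cminus; apply gh_cont; auto.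
  apply EE_cont. apply CH. apply cmul. apply EE_cont. apply HHd.
  apply cpow2. apply fH_cont; auto. pose proof (fH_pos beta sG Hsp t). apply Rgt_not_eq, pow_lt; lra.
Qed.

Lemma EE_eq t : 0 <= t <= 1 -> EE t = gfun alpha t / gfun beta t.
Proof.
  intros. rewrite !gfun_eq by auto. unfold EE, gH, Rminus. rewrite exp_plus, exp_Ropp. reflexivity.
Qed.

Lemma piece_lemma (ps H Hd : R -> R) a b :
  (forall s, is_derive H s (Hd s)) -> (forall s, continuous Hd s) ->
  0 <= a -> a < b -> b <= 1 ->
  (forall s, a <= s <= b -> ps s = gfun alpha s * H s) ->
  ps b / gfun beta b - ps a / gfun beta a = RInt (fun t => fH beta sG t ^ 2 * Vf H Hd t) a b /\
  forall t, a < t < b ->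
    / ffun alpha sG t * Derive (fun s => ps s / gfun alpha s) t + (alpha t - beta t) / sG t * ps t
    = fH beta sG t * Vf H Hd t.
Proof.
  intros HH HHd Ha0 Hab Hb1 Hps.
  assert (CH : forall s, continuous H s).
  { intros s. apply (@ex_derive_continuous R_AbsRing R_NormedModule). eexists; apply HH. }
  assert (gpos : forall g t, 0 < gfun g t) by (intros; unfold gfun; apply exp_pos).
  assert (fBp : forall t, 0 < fH beta sG t) by (intros; apply fH_pos; auto).
  split.
  - assert (Xe : forall s, a <= s <= b -> ps s / gfun beta s = EE s * H s).
    { intros s Hs'. rewrite Hps, EE_eq by (auto; lra). specialize (gpos beta s). field; lra. }
    rewrite !Xe by lra.
    rewrite (RInt_ext _ (Pd H Hd)).
    2:{ intros x _. unfold Vf. specialize (fBp x). rring_f. field. apply Rgt_not_eq; lra. }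
    symmetry. apply is_RInt_unique.
    apply (@is_RInt_derive R_CompleteNormedModule (fun s => EE s * H s)).
    + intros x _. unfold Pd.
      pose proof (is_derive_mult EE H x _ _ (EE_deriv x) (HH x) Rmult_comm) as D.
      replace ((gh alpha x - gh beta x) * EE x * H x + EE x * Hd x)
        with (plus (mult ((gh alpha x - gh beta x) * EE x) (H x)) (mult (EE x) (Hd x))) by reflexivity.
      exact D.
    + intros x _. unfold Pd. apply cplus. apply cmul. apply cmul. apply cminus; apply gh_cont; auto.
      apply EE_cont. apply CH. apply cmul. apply EE_cont. apply HHd.
  - intros t Ht.
    assert (Loc : locally t (fun s => ps s / gfun alpha s = H s)).
    { apply (locally_interval _ t a b); simpl; try lra.
      intros y Hy1 Hy2. rewrite Hps by lra. specialize (gpos alpha y). field; lra. }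
    replace (Derive (fun s => ps s / gfun alpha s) t) with (Hd t).
    2:{ rewrite <- (is_derive_unique H t (Hd t) (HH t)). symmetry. apply Derive_ext_loc. exact Loc. }
    rewrite Hps by lra.
    assert (T01 : 0 <= t <= 1) by lra.
    rewrite (ffun_eq alpha sG t T01), (gfun_eq alpha t T01).
    unfold Vf, Pd, fH, gH. rewrite (EE_eq t T01). rewrite !gfun_eq by auto. unfold gH.
    unfold gh, sh. rewrite !clamp_id by auto.
    rewrite !exp_Ropp.
    pose proof (exp_pos (Gh alpha t)). pose proof (exp_pos (Gh beta t)). pose proof (Hsp t T01).
    field. repeat split; lra.
Qed.

End Piece.


Section Main.
Variables (alpha beta sG : R -> R) (rho : R) (l m r : nat -> nat -> R).
Hypothesis Halpha : holder01 alpha.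
Hypothesis Hbeta : holder01 beta.
Hypothesis HsG : holder01 sG.
Hypothesis HsGpos : forall t, 0 <= t <= 1 -> 0 < sG t.
Hypothesis Hpart : partition rho l m r.

Definition Hg (L p c : R) (s : R) : R := L * (p * hH alpha sG s + c).
Definition Hdg (L p : R) (s : R) : R := L * (p * fH alpha sG s ^ 2).

Lemma Hg_deriv L p c s : is_derive (Hg L p c) s (Hdg L p s).
Proof.
  unfold Hg, Hdg. apply (is_derive_scal (fun s => p * hH alpha sG s + c)).
  pose proof (is_derive_plus (fun s => p * hH alpha sG s) (fun _ => c) s _ _
     (is_derive_scal _ s p _ (hH_deriv alpha sG Halpha HsG s)) (is_derive_const c s)) as D.
  replace (p * fH alpha sG s ^ 2) with (plus (p * fH alpha sG s ^ 2) zero).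
  exact D. apply plus_zero_r.
Qed.

Lemma Hdg_cont L p s : continuous (Hdg L p) s.
Proof. unfold Hdg. cont. apply fH_cont; auto. Qed.

Let ps n k := psi alpha sG l m r n k.
Let uu n k t := phi alpha sG l m r n k t + (alpha t - beta t) / sG t * psi alpha sG l m r n k t.

Definition Lv (n k : nat) (i : nat) : R * R * R :=
  if Nat.eqb n 0 then (Lc alpha sG l m r n k, 1, - hH alpha sG 0)
  else match i with
       | O => (Lc alpha sG l m r n k, 1, - hH alpha sG (l n k))
       | S O => (Rc alpha sG l m r n k, -1, hH alpha sG (r n k))
       | _ => (0, 0, 0)
       end.

Definition HH n k i := let '(L, p, c) := Lv n k i in Hg L p c.
Definition HHd n k i := let '(L, p, c) := Lv n k i in Hdg L p.

Lemma HH_deriv n k i s : is_derive (HH n k i) s (HHd n k i s).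
Proof. unfold HH, HHd. destruct (Lv n k i) as ((L, p), c). apply Hg_deriv. Qed.
Lemma HHd_cont n k i s : continuous (HHd n k i) s.
Proof. unfold HHd. destruct (Lv n k i) as ((L, p), c). apply Hdg_cont. Qed.

Lemma gposA t : 0 < gfun alpha t.
Proof. unfold gfun; apply exp_pos. Qed.

Lemma psi_pieces n k : inI n k -> exists N0, forall N j, (N0 <= N)%nat -> (j < 2^N)%nat ->
  exists i, (i < 3)%nat /\ forall s, l (S N) j <= s <= r (S N) j -> ps n k s = gfun alpha s * HH n k i s.
Proof.
  intros [(-> & ->) | (Hn & Hk)].
  - exists 0%nat. intros N j _ Hj. exists 0%nat. split. lia.
    intros s Hs. destruct (G_range rho l m r Hpart N j Hj). unfold ps, psi. cbn [Nat.eqb HH Lv]. unfold Hg.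
    rewrite hint_eq by lra. ring.
  - destruct n as [|b]. lia. replace (S b - 1)%nat with b in Hk by lia.
    exists (S b). intros N j HN Hj.
    destruct (Hp rho l m r Hpart b k Hk) as ((Hlm & Hmr) & _).
    destruct (G_range rho l m r Hpart b k Hk) as (R1 & R2).
    destruct (G_range rho l m r Hpart N j Hj) as (R3 & R4).
    pose proof (G_lr rho l m r Hpart N j Hj) as Hab.
    unfold ps, psi. cbn [Nat.eqb HH Lv]. unfold Hg.
    destruct (classify rho l m r Hpart b k N j Hk HN Hj) as [C|[C|[(C1&C2)|(C1&C2)]]].
    + exists 2%nat. split. lia. intros s Hs. cbn [Nat.eqb HH Lv]. unfold Hg.
      destruct (Rle_dec (l (S b) k) s). destruct (Rle_dec s (m (S b) k)).
      replace s with (l (S b) k) by lra. unfold hint. ring. lra. ring.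
    + exists 2%nat. split. lia. intros s Hs. cbn [Nat.eqb HH Lv]. unfold Hg.
      destruct (Rle_dec (l (S b) k) s). destruct (Rle_dec s (m (S b) k)). lra.
      destruct (Rle_dec s (r (S b) k)). replace s with (r (S b) k) by lra. unfold hint. ring. ring. lra.
    + exists 0%nat. split. lia. intros s Hs. cbn [Nat.eqb HH Lv]. unfold Hg.
      destruct (Rle_dec (l (S b) k) s); [|lra]. destruct (Rle_dec s (m (S b) k)); [|lra].
      rewrite hint_eq by lra. ring.
    + exists 1%nat. split. lia. intros s Hs. cbn [Nat.eqb HH Lv]. unfold Hg.
      destruct (Rle_dec (l (S b) k) s); [|lra]. destruct (Rle_dec s (m (S b) k)).
      * replace s with (m (S b) k) by lra.
        assert (E : Lc alpha sG l m r (S b) k * hint alpha sG (l (S b) k) (m (S b) k) =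
                    Rc alpha sG l m r (S b) k * hint alpha sG (m (S b) k) (r (S b) k)).
        { unfold Lc, Rc. simpl Nat.eqb. cbv iota.
          pose proof (hint_pos alpha sG Halpha HsG HsGpos (l (S b) k) (m (S b) k) ltac:(lra) Hlm ltac:(lra)).
          pose proof (hint_pos alpha sG Halpha HsG HsGpos (m (S b) k) (r (S b) k) ltac:(lra) Hmr ltac:(lra)).
          pose proof (gposA (m (S b) k)).
          field. repeat split; apply Rgt_not_eq; auto. }
        replace (-1 * hH alpha sG (m (S b) k) + hH alpha sG (r (S b) k)) with (hint alpha sG (m (S b) k) (r (S b) k)) by (rewrite hint_eq by lra; ring).
        replace (gfun alpha (m (S b) k) * hint alpha sG (l (S b) k) (m (S b) k) * Lc alpha sG l m r (S b) k)
          with (gfun alpha (m (S b) k) * (Lc alpha sG l m r (S b) k * hint alpha sG (l (S b) k) (m (S b) k))) by ring.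
        rewrite E. ring.
      * destruct (Rle_dec s (r (S b) k)); [|lra].
        rewrite hint_eq by lra. ring.
Qed.

Lemma psi_reg n k : inI n k -> exists N0, forall N j, (N0 <= N)%nat -> (j < 2^N)%nat ->
  exists i, (i < 3)%nat /\
  ps n k (r (S N) j) / gfun beta (r (S N) j) - ps n k (l (S N) j) / gfun beta (l (S N) j) =
    RInt (fun t => fH beta sG t ^ 2 * Vf alpha beta sG (HH n k i) (HHd n k i) t) (l (S N) j) (r (S N) j) /\
  forall t, l (S N) j < t < r (S N) j -> uu n k t = fH beta sG t * Vf alpha beta sG (HH n k i) (HHd n k i) t.
Proof.
  intros Hnk. destruct (psi_pieces n k Hnk) as (N0 & HN0). exists N0.
  intros N j HN Hj. destruct (HN0 N j HN Hj) as (i & Hi & Hpsi). exists i. split; auto.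
  destruct (G_range rho l m r Hpart N j Hj) as (R3 & R4).
  pose proof (G_lr rho l m r Hpart N j Hj) as Hab.
  destruct (piece_lemma alpha beta sG Halpha Hbeta HsGpos (ps n k) (HH n k i) (HHd n k i) _ _
     (HH_deriv n k i) (HHd_cont n k i) R3 Hab R4 Hpsi) as (D1 & D2).
  split. exact D1. intros t Ht. unfold uu. rewrite <- D2 by auto. reflexivity.
Qed.

Lemma psi0 n k : inI n k -> ps n k 0 = 0.
Proof.
  intros [(-> & ->) | (Hn & Hk)].
  - unfold ps, psi. simpl Nat.eqb. cbv iota. unfold hint. ring.
  - destruct n as [|b]. lia. replace (S b - 1)%nat with b in Hk by lia.
    destruct (G_range rho l m r Hpart b k Hk) as (R1 & R2).
    destruct (Hp rho l m r Hpart b k Hk) as ((Hlm & Hmr) & _).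
    unfold ps, psi. simpl Nat.eqb. cbv iota.
    destruct (Rle_dec (l (S b) k) 0). destruct (Rle_dec 0 (m (S b) k)).
    replace (l (S b) k) with 0 by lra. unfold hint. ring. lra. reflexivity.
Qed.

Theorem main_lim n k p q : inI n k -> inI p q ->
  is_lim_seq (sumI (fun i j => Gmat alpha beta sG l m r i j n k * Gmat alpha beta sG l m r i j p q))
    (RInt (fun t => uu n k t * uu p q t) 0 1).
Proof.
  intros Hnk Hpq.
  destruct (psi_reg n k Hnk) as (N1 & R1).
  destruct (psi_reg p q Hpq) as (N2 & R2).
  eapply is_lim_seq_ext.
  2:{ apply (conv_main rho l m r Hpart (fH beta sG)
        (fun t => ps n k t / gfun beta t) (fun t => ps p q t / gfun beta t)
        (uu n k) (uu p q)
        (fun i => Vf alpha beta sG (HH n k i) (HHd n k i))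
        (fun i => Vf alpha beta sG (HH p q i) (HHd p q i)) (max N1 N2)).
      - intros; apply fH_cont; auto.
      - intros; apply fH_pos; auto.
      - intros i t. apply Vf_cont; auto. apply HH_deriv. apply HHd_cont.
      - intros i t. apply Vf_cont; auto. apply HH_deriv. apply HHd_cont.
      - intros N j HN Hj. apply R1; auto. lia.
      - intros N j HN Hj. apply R2; auto. lia. }
  intros N.
  unfold Gmat. rewrite (alg_main beta sG rho l m r Hpart (hint_pos beta sG Hbeta HsG HsGpos)).
  2: apply psi0; auto. 2: apply psi0; auto.
  apply ssum_ext. intros j Hj. unfold Tm.
  destruct (G_range rho l m r Hpart N j Hj) as (R3 & R4).
  pose proof (G_lr rho l m r Hpart N j Hj) as Hab.
  rewrite (hint_int beta sG Hbeta HsG) by lra. reflexivity.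
Qed.

End Main.

Lemma sum_comb (A B C : nat -> R) N : (forall n, A n <= (B n + C n) / 2) ->
  sum_f_R0 A N <= (sum_f_R0 B N + sum_f_R0 C N) / 2.
Proof. intros H. induction N; simpl. apply H. pose proof (H (S N)). lra. Qed.

Lemma sumI_incr (G : nat -> nat -> R) : (forall i j, 0 <= G i j) -> forall N, sumI G N <= sumI G (S N).
Proof.
  intros H N. unfold sumI. rewrite tech5.
  pose proof (cond_pos_sum (fun j => G (S N) j) (level_size (S N) - 1) (fun n => H _ n)). lra.
Qed.

Lemma abs_prod_le a b : Rabs (a * b) <= (a * a + b * b) / 2.
Proof.
  rewrite Rabs_mult.
  assert (E1 : Rabs a * Rabs a = a * a) by (rewrite <- Rabs_mult; apply Rabs_right; apply Rle_ge, Rle_0_sqr).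
  assert (E2 : Rabs b * Rabs b = b * b) by (rewrite <- Rabs_mult; apply Rabs_right; apply Rle_ge, Rle_0_sqr).
  pose proof (Rle_0_sqr (Rabs a - Rabs b)). unfold Rsqr in *. nra.
Qed.

Theorem lemma7 (alpha beta sG : R -> R) (rho : R) (l m r : nat -> nat -> R)
  (Halpha : holder01 alpha) (Hbeta : holder01 beta) (HsG : holder01 sG)
  (HsGpos : forall t, 0 <= t <= 1 -> 0 < sG t)
  (Hpart : partition rho l m r)
  (n k p q : nat) (Hnk : inI n k) (Hpq : inI p q) :
  let F := fun i j => Gmat alpha beta sG l m r i j n k * Gmat alpha beta sG l m r i j p q in
  ex_finite_lim_seq (sumI (fun i j => Rabs (F i j))) /\
  is_lim_seq (sumI F)
    (RInt (fun t =>
       (phi alpha sG l m r n k t + (alpha t - beta t) / sG t * psi alpha sG l m r n k t) *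
       (phi alpha sG l m r p q t + (alpha t - beta t) / sG t * psi alpha sG l m r p q t))
       0 1).
Proof.
  intros F. split.
  2: exact (main_lim alpha beta sG rho l m r Halpha Hbeta HsG HsGpos Hpart n k p q Hnk Hpq).
  pose proof (main_lim alpha beta sG rho l m r Halpha Hbeta HsG HsGpos Hpart n k n k Hnk Hnk) as Lx.
  pose proof (main_lim alpha beta sG rho l m r Halpha Hbeta HsG HsGpos Hpart p q p q Hpq Hpq) as Ly.
  set (Ix := RInt _ 0 1) in Lx. set (Iy := RInt _ 0 1) in Ly.
  apply ex_finite_lim_seq_incr with (M := (Ix + Iy) / 2).
  - apply sumI_incr. intros; apply Rabs_pos.
  - intros N.
    assert (Bx := is_lim_seq_incr_compare _ _ Lx (sumI_incr _ (fun i j => Rle_0_sqr _)) N).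
    assert (By := is_lim_seq_incr_compare _ _ Ly (sumI_incr _ (fun i j => Rle_0_sqr _)) N).
    eapply Rle_trans. 2:{ apply Rmult_le_compat_r. lra. apply Rplus_le_compat; [exact Bx| exact By]. }
    unfold sumI. apply sum_comb. intros i. apply sum_comb. intros j.
    unfold F. apply abs_prod_le.
Qed.
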